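(* Let $G$ be a simple dimension group with exactly $n>1$ pure (extremal) normalized traces. If either $\operatorname{rank}(G/\mathrm{Inf}(G))=n$, or $\operatorname{rank}(G/\mathrm{Inf}(G))=n+1$ and $G/\mathrm{Inf}(G)$ is finitely generated, then $G$ is globally irrationally miscible.
   Context: A dimension group is an unperforated partially ordered abelian group with the Riesz interpolation property; simple means no nontrivial order ideals. For an order unit $u$, $S(G,u)$ is the compact convex set of states (homomorphisms $\sigma:G\to\mathbb R$, $\sigma(G^+)\ge0$, $\sigma(u)=1$), and pure traces are its extreme points. $\mathrm{Inf}(G)=\{g:-\epsilon u\le g\le\epsilon u\ \forall\epsilon\in\mathbb Q_{>0}\}$. $\operatorname{rank}H=\dim_{\mathbb Q}(H\otimes\mathbb Q)$. $J(G,u)=\{g:\sigma\mapsto\sigma(g)\text{ constant on }S(G,u)\}$ with $\Phi(g)$ the constant; $(G,u)$ is irrationally miscible if $\Phi(J(G,u))\subseteq\mathbb Q$, and $G$ is globally irrationally miscible if this holds for all order units $u$. *)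

(* Defs.v *)
From HB Require Import structures.
From mathcomp Require Import all_boot all_order all_algebra.
From mathcomp Require Import reals.
Set Implicit Arguments. Unset Strict Implicit. Unset Printing Implicit Defensive.
Import Order.TTheory GRing.Theory Num.Theory.
Local Open Scope ring_scope.

Section PoGroups.
Variable G : zmodType.
(* P is the positive cone G^+ ; x <= y  iff  y - x \in G^+ *)
Variable P : G -> Prop.

Definition leG (x y : G) : Prop := P (y - x).

Definition is_pogroup : Prop :=
  [/\ P 0, (forall x y, P x -> P y -> P (x + y)) & (forall x, P x -> P (- x) -> x = 0)].

Definition directed : Prop := forall g, exists a b, [/\ P a, P b & g = a - b].

Definition unperforated : Prop := forall (n : nat) (g : G), (0 < n)%N -> P (g *+ n) -> P g.

Definition riesz_interpolation : Prop :=
  forall a1 a2 b1 b2, leG a1 b1 -> leG a1 b2 -> leG a2 b1 -> leG a2 b2 ->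
    exists c, [/\ leG a1 c, leG a2 c, leG c b1 & leG c b2].

Definition dimension_group : Prop :=
  [/\ is_pogroup, directed, unperforated & riesz_interpolation].

Definition order_ideal (I : G -> Prop) : Prop :=
  [/\ I 0, (forall x y, I x -> I y -> I (x - y)),
      (forall a b, P a -> leG a b -> I b -> I a) &
      (forall x, I x -> exists a b, [/\ I a, P a, I b, P b & x = a - b])].

Definition simple_pog : Prop :=
  forall I, order_ideal I -> (forall x, I x -> x = 0) \/ (forall x, I x).

Definition order_unit (u : G) : Prop := P u /\ forall g, exists n : nat, leG g (u *+ n).

(* infinitesimals: -eps u <= g <= eps u for every rational eps = p/q > 0,
   i.e. -(p u) <= q g <= p u *)
Definition Inf (u : G) (g : G) : Prop :=
  forall p q : nat, (0 < p)%N -> (0 < q)%N ->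
    leG (g *+ q) (u *+ p) /\ leG (- (u *+ p)) (g *+ q).

(* rank of G/I (dim_Q (G/I (x) Q)) = maximal number of elements of G that are
   Z-linearly independent modulo I *)
Definition indep_mod (I : G -> Prop) (k : nat) (g : 'I_k -> G) : Prop :=
  forall c : 'I_k -> int, I (\sum_(i < k) g i *~ c i) -> forall i, c i = 0.

Definition rank_quot_eq (I : G -> Prop) (k : nat) : Prop :=
  (exists g : 'I_k -> G, indep_mod I g) /\ (forall g : 'I_k.+1 -> G, ~ indep_mod I g).

Definition quot_fg (I : G -> Prop) : Prop :=
  exists (k : nat) (s : 'I_k -> G), forall g, exists c : 'I_k -> int,
    I (g - \sum_(i < k) s i *~ c i).

Variable R : realType.

Definition state (u : G) (s : G -> R) : Prop :=
  [/\ (forall x y, s (x + y) = s x + s y), (forall x, P x -> 0 <= s x) & s u = 1].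

Definition pure_state (u : G) (s : G -> R) : Prop :=
  state u s /\
  forall (s1 s2 : G -> R) (t : R), state u s1 -> state u s2 -> 0 < t -> t < 1 ->
    (forall g, s g = t * s1 g + (1 - t) * s2 g) -> s1 = s /\ s2 = s.

Definition exactly_n_pure_states (u : G) (n : nat) : Prop :=
  exists f : 'I_n -> (G -> R), injective f /\ forall s, pure_state u s <-> exists i, s = f i.

(* (G,u) irrationally miscible: every g in J(G,u) has rational constant value *)
Definition irrationally_miscible (u : G) : Prop :=
  forall g : G, (forall s1 s2, state u s1 -> state u s2 -> s1 g = s2 g) ->
    forall s, state u s -> exists q : rat, s g = ratr q.

Definition globally_irrationally_miscible : Prop :=
  forall v, order_unit v -> irrationally_miscible v.

End PoGroups.

(* Main.v *)
Require Import Defs.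
From HB Require Import structures.
From mathcomp Require Import all_boot all_order all_algebra.
From mathcomp Require Import reals.
From Stdlib Require Import ClassicalEpsilon Classical.
Import Order.TTheory GRing.Theory Num.Theory.
Set Implicit Arguments. Unset Strict Implicit. Unset Printing Implicit Defensive.
Local Open Scope ring_scope.
From mathcomp Require Import boolp classical_sets.
From mathcomp Require Import ring lra.
Section Basic.
Variables (G : zmodType) (P : G -> Prop).
Hypothesis HG : dimension_group P.

Lemma P0 : P 0. Proof. by case: HG => -[]. Qed.
Lemma PD x y : P x -> P y -> P (x + y). Proof. by case: HG => -[] _ H _ _ _ _; apply: H. Qed.
Lemma Panti x : P x -> P (- x) -> x = 0. Proof. by case: HG => -[] _ _ H _ _ _; apply: H. Qed.
Lemma Pdir g : exists a b, [/\ P a, P b & g = a - b]. Proof. by case: HG => _ H _ _; apply: H. Qed.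
Lemma Priesz : riesz_interpolation P. Proof. by case: HG. Qed.
Lemma PMn x k : P x -> P (x *+ k).
Proof. move=> Px; elim: k => [|k IH]; first by rewrite mulr0n; exact: P0. by rewrite mulrS; apply: PD. Qed.

Lemma Pdec x a b : P x -> P a -> P b -> P (a + b - x) ->
  exists x1, [/\ P x1, P (a - x1), P (x - x1) & P (b - (x - x1))].
Proof.
move=> Px Pa Pb Pab.
have [||||c [H1 H2 H3 H4]] := @Priesz 0 (x - b) a x.
- by rewrite /leG subr0.
- by rewrite /leG subr0.
- by rewrite /leG opprB addrA.
- by rewrite /leG opprB addrCA subrr addr0.
exists c; split => //.
- by move: H1; rewrite /leG subr0.
- by move: H2; rewrite /leG !opprB addrCA.
Qed.

Lemma Ptrans x y z : P (y - x) -> P (z - y) -> P (z - x).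
Proof. by move=> H1 H2; have := PD H2 H1; rewrite addrA subrK. Qed.

Lemma Pdec_n (p : G) : P p -> (forall y, P y -> P (p - y) -> y = 0 \/ y = p) ->
  forall m x, P x -> P (p *+ m - x) -> exists k, x = p *+ k.
Proof.
move=> Pp Hat; elim=> [|m IH] x Px Hx.
  by exists 0%N; rewrite mulr0n; apply: Panti => //; move: Hx; rewrite mulr0n sub0r.
have Hx' : P (p + p *+ m - x) by rewrite -mulrS.
have [x1 [P1 P2 P3 P4]] := @Pdec x p (p *+ m) Px Pp (PMn m Pp) Hx'.
have [k Hk] := IH _ P3 P4.
case: (Hat _ P1 P2) => E; subst x1.
  by exists k; rewrite -Hk subr0.
by exists k.+1; rewrite mulrS -Hk addrC subrK.
Qed.

Lemma leD a b c d : leG P a b -> leG P c d -> leG P (a + c) (b + d).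
Proof. by rewrite /leG opprD addrACA; apply: PD. Qed.
Lemma leN a b : leG P a b -> leG P (- b) (- a).
Proof. by rewrite /leG opprK addrC. Qed.
Lemma leT a b c : leG P a b -> leG P b c -> leG P a c.
Proof. move=> H1 H2; exact: Ptrans H1 H2. Qed.
Lemma le_refl a : leG P a a.
Proof. by rewrite /leG subrr; exact: P0. Qed.
Lemma leP0 x : P x <-> leG P 0 x.
Proof. by rewrite /leG subr0. Qed.
Lemma leMn a b k : leG P a b -> leG P (a *+ k) (b *+ k).
Proof. by rewrite /leG -mulrnBl; apply: PMn. Qed.
Lemma leDl a b c : leG P a b -> leG P (c + a) (c + b).
Proof. by move=> H; apply: leD => //; exact: le_refl. Qed.
Lemma leDr a b c : leG P a b -> leG P (a + c) (b + c).
Proof. by move=> H; apply: leD => //; exact: le_refl. Qed.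

Lemma simple_unit : simple_pog P -> forall x, P x -> x <> 0 -> order_unit P x.
Proof.
move=> Hs x Px Hx0; split => //.
have Px0 : leG P 0 x by rewrite -leP0.
have Pxk k : leG P 0 (x *+ k) by rewrite -(mul0rn _ k); apply: leMn.
have Nxk k : leG P (- (x *+ k)) 0 by rewrite -oppr0; apply: leN.
pose I g := exists k, leG P (- (x *+ k)) g /\ leG P g (x *+ k).
have HI : order_ideal P I.
  split.
  - exists 0%N; rewrite mulr0n oppr0; split; exact: le_refl.
  - move=> a b [k [Ha1 Ha2]] [l [Hb1 Hb2]]; exists (k + l)%N; rewrite mulrnDr opprD; split.
      by apply: leD => //; apply: leN.
    by apply: leD => //; move/leN: Hb1; rewrite opprK.
  - move=> a b Pa Hab [k [Hk1 Hk2]]; exists k; split.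
      by apply: (leT (Nxk k)); rewrite -leP0.
    exact: leT Hab Hk2.
  - move=> g [k [Hk1 Hk2]]; exists (g + x *+ k), (x *+ k); split => //.
    + exists (k + k)%N; split.
        apply: (leT (Nxk _)); rewrite -leP0.
        by move: Hk1; rewrite /leG opprK.
      by rewrite mulrnDr; apply: leDr.
    + by move: Hk1; rewrite /leG opprK.
    + exists k; split; last exact: le_refl.
      by apply: (leT (Nxk k)); rewrite -leP0; exact: PMn.
    + by rewrite leP0.
    + by rewrite addrK.
case: (Hs _ HI) => [H0|Hall].
  exfalso; apply: Hx0; apply: H0; exists 1%N; rewrite mulr1n; split; last exact: le_refl.
  by apply: (leT _ Px0); move/leN: Px0; rewrite oppr0.
move=> g; have [k [_ Hk]] := Hall g; by exists k.
Qed.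

End Basic.
Section States.
Variables (G : zmodType) (P : G -> Prop) (R : realType).
Hypothesis HG : dimension_group P.

Definition addf (k : G -> R) := forall x y, k (x + y) = k x + k y.

Section Addf.
Variable k : G -> R.
Hypothesis hk : addf k.
Lemma af0 : k 0 = 0.
Proof. by apply: (addrI (k 0)); rewrite -hk !addr0. Qed.
Lemma afN x : k (- x) = - k x.
Proof. by apply/eqP; rewrite -addr_eq0 -hk addNr af0. Qed.
Lemma afB x y : k (x - y) = k x - k y.
Proof. by rewrite hk afN. Qed.
Lemma afMn x m : k (x *+ m) = k x *+ m.
Proof. by elim: m => [|m IH]; rewrite ?mulr0n ?af0 // !mulrS hk IH. Qed.
Lemma afMz x (z : int) : k (x *~ z) = k x *~ z.
Proof. case: z => m; first exact: afMn. by rewrite NegzE !mulrNz afN afMn. Qed.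
Lemma af_sum (I : Type) (r : seq I) (F : I -> G) : k (\sum_(i <- r) F i) = \sum_(i <- r) k (F i).
Proof. by elim: r => [|a r IH]; rewrite ?big_nil ?af0 // !big_cons hk IH. Qed.
End Addf.

Definition posf (k : G -> R) := forall x, P x -> 0 <= k x.

Lemma af_le (k : G -> R) a b : addf k -> posf k -> leG P a b -> k a <= k b.
Proof. by move=> ha hp H; rewrite -subr_ge0 -afB //; apply: hp. Qed.

Lemma st_add u (s : G -> R) : state P u s -> addf s. Proof. by case. Qed.
Lemma st_pos u (s : G -> R) : state P u s -> posf s. Proof. by case. Qed.
Lemma st_u u (s : G -> R) : state P u s -> s u = 1. Proof. by case. Qed.

Lemma posf_unit u (k : G -> R) v : addf k -> posf k -> order_unit P v -> 0 < k u -> 0 < k v.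
Proof.
move=> ha hp [Pv Hv] ku; have [m Hm] := Hv u.
have := af_le ha hp Hm; rewrite afMn // => H.
rewrite lt_neqAle hp // andbT; apply/eqP => E; move: H; rewrite -E mul0rn.
by rewrite leNgt ku.
Qed.

Lemma st_unit_pos u (s : G -> R) v : state P u s -> order_unit P v -> 0 < s v.
Proof. move=> hs hv; apply: (posf_unit (u:=u)) (st_add hs) (st_pos hs) hv _; by rewrite (st_u hs). Qed.

Lemma st_scale u (s : G -> R) v : state P u s -> order_unit P v -> state P v (fun x => s x / s v).
Proof.
move=> hs hv; have sv := st_unit_pos hs hv; split.
- by move=> x y; rewrite (st_add hs) mulrDl.
- by move=> x Px; apply: divr_ge0; [exact: (st_pos hs) | exact: ltW].
- by rewrite divff // gt_eqF.
Qed.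

Lemma posf_zero u (k : G -> R) : addf k -> posf k -> order_unit P u -> k u = 0 -> forall z, k z = 0.
Proof.
move=> ha hp [Pu Hu] ku.
have Hpos x : P x -> k x = 0.
  move=> Px; have [m Hm] := Hu x; have := af_le ha hp Hm; rewrite afMn // ku mul0rn => H.
  by apply/eqP; rewrite eq_le H hp.
move=> z; have [a [b [Pa Pb ->]]] := Pdir HG z.
by rewrite afB // !Hpos // subrr.
Qed.

Lemma st_Inf u (s : G -> R) g : state P u s -> Inf P u g -> s g = 0.
Proof.
move=> hs Hg.
have H q : (0 < q)%N -> `|s g| *+ q <= 1.
  move=> q0; have [H1 H2] := Hg 1%N q isT q0.
  have := af_le (st_add hs) (st_pos hs) H1; rewrite !(afMn (st_add hs)) mulr1n (st_u hs) => A.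
  have := af_le (st_add hs) (st_pos hs) H2; rewrite (afN (st_add hs)) !(afMn (st_add hs)).
  rewrite ?mulr1n (st_u hs) => B.
  case: (lerP 0 (s g)) => sg0; first by rewrite ger0_norm.
  by rewrite ltr0_norm // mulNrn lerNl.
apply/normr0_eq0/eqP; rewrite eq_le normr_ge0 andbT; apply/negP => /negP.
rewrite -ltNge => gt0.
have := H (Num.bound (`|s g|^-1)).+1 isT.
have hi : 0 < `|s g|^-1 by rewrite invr_gt0.
have := archi_boundP (ltW hi); set b := Num.bound _ => Hb H'.
have E : 1 < `|s g| * (b.+1)%:R.
  have : `|s g| * `|s g|^-1 < `|s g| * (b.+1)%:R.
    by rewrite ltr_pM2l //; apply: (lt_le_trans Hb); rewrite ler_nat.
  by rewrite mulfV // lt0r_neq0.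
by move: H'; rewrite -mulr_natr leNgt E.
Qed.
End States.
Section Meet.
Variables (G : zmodType) (P : G -> Prop) (R : realType).
Hypothesis HG : dimension_group P.
Variables (u : G) (f g : G -> R).
Hypothesis Hu : order_unit P u.
Hypothesis sf : state P u f.
Hypothesis sg : state P u g.
Local Open Scope classical_set_scope.

Definition Fset x := [set r : R | exists y, [/\ P y, P (x - y) & r = f y + g (x - y)]].
Definition hm x := inf (Fset x).

Let af := st_add sf.
Let ag := st_add sg.
Let pf := st_pos sf.
Let pg := st_pos sg.

Lemma F_lb x : has_lbound (Fset x).
Proof. by exists 0 => r [y [Py Pxy ->]]; rewrite addr_ge0 // ?pf ?pg. Qed.

Lemma F_ne x : P x -> Fset x !=set0.
Proof. by move=> Px; exists (f 0 + g (x - 0)), 0; split => //; [exact: P0 | rewrite subr0]. Qed.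

Lemma hm_le x y : P y -> P (x - y) -> hm x <= f y + g (x - y).
Proof. by move=> Py Pxy; apply: (ge_inf (F_lb x)); exists y. Qed.

Lemma hm_ge x r : P x -> (forall y, P y -> P (x - y) -> r <= f y + g (x - y)) -> r <= hm x.
Proof. by move=> Px H; apply: lb_le_inf (F_ne Px) _ => _ [y [Py Pxy ->]]; apply: H. Qed.

Lemma hm_ge0 x : P x -> 0 <= hm x.
Proof. by move=> Px; apply: hm_ge => // y Py Pxy; rewrite addr_ge0 ?pf ?pg. Qed.

Lemma hm_lef x : P x -> hm x <= f x.
Proof. by move=> Px; have := @hm_le x x Px; rewrite subrr (af0 ag) addr0; apply; exact: P0. Qed.

Lemma hm_leg x : P x -> hm x <= g x.
Proof. by move=> Px; have := @hm_le x 0; rewrite (af0 af) add0r subr0; apply => //; exact: P0. Qed.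

Lemma hm_add x1 x2 : P x1 -> P x2 -> hm (x1 + x2) = hm x1 + hm x2.
Proof.
move=> P1 P2; have P12 := PD HG P1 P2; apply/eqP; rewrite eq_le; apply/andP; split.
- rewrite -lerBlDr; apply: hm_ge => // y1 Py1 Pxy1.
  rewrite lerBlDr -lerBlDl; apply: hm_ge => // y2 Py2 Pxy2.
  rewrite lerBlDl; apply: (le_trans (hm_le (x := x1 + x2) (PD HG Py1 Py2) _)).
    by have := PD HG Pxy1 Pxy2; rewrite opprD addrACA.
  rewrite opprD addrACA !af !ag; lra.
- apply: hm_ge => // y Py Pxy.
  have [y1 [Q1 Q2 Q3 Q4]] := Pdec HG Py P1 P2 Pxy.
  rewrite -[y](subrK y1) af; set y2 := y - y1.
  have -> : x1 + x2 - (y2 + y1) = (x1 - y1) + (x2 - y2).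
    by rewrite [y2 + y1]addrC opprD addrACA.
  have H1 := @hm_le x1 y1 Q1 Q2; have H2 := @hm_le x2 y2 Q3 Q4.
  rewrite ag; lra.
Qed.
End Meet.
Section Ext.
Variables (G : zmodType) (P : G -> Prop) (R : realType).
Hypothesis HG : dimension_group P.

Lemma ex_pp z : exists a, P a /\ P (a - z).
Proof. have [a [b [Pa Pb ->]]] := Pdir HG z; exists a; split => //; by rewrite opprB addrC subrK. Qed.

Definition pp z : G := proj1_sig (cid (ex_pp z)).
Lemma ppP z : P (pp z) /\ P (pp z - z).
Proof. exact: (proj2_sig (cid (ex_pp z))). Qed.

Variable k : G -> R.
Hypothesis hk : forall x y, P x -> P y -> k (x + y) = k x + k y.

Definition extk z := k (pp z) - k (pp z - z).

Lemma extk_pos x : P x -> extk x = k x.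
Proof.
move=> Px; have [H1 H2] := ppP x; rewrite /extk.
have E : pp x = x + (pp x - x) by rewrite addrC subrK.
by rewrite {1}E hk // addrK.
Qed.

Lemma eq_aux (a a1 a2 z1 z2 : G) : a + (a1 - z1) + (a2 - z2) = a1 + a2 + (a - (z1 + z2)).
Proof. by rewrite opprD !addrA [a + a1 - z1 + a2]addrAC [a1 + a2 + a]addrC !addrA. Qed.

Lemma extk_add : addf extk.
Proof.
move=> z1 z2; rewrite /extk.
have [A1 B1] := ppP z1; have [A2 B2] := ppP z2; have [A B] := ppP (z1 + z2).
have := congr1 k (eq_aux (pp (z1 + z2)) (pp z1) (pp z2) z1 z2).
rewrite (hk (PD HG A B1) B2) (hk A B1) (hk (PD HG A1 A2) B) (hk A1 A2).
lra.
Qed.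
End Ext.

Section MeetSmall.
Variables (G : zmodType) (P : G -> Prop) (R : realType).
Hypothesis HG : dimension_group P.
Variables (u : G) (f g : G -> R).
Hypothesis Hu : order_unit P u.

Lemma meet_small : pure_state P u f -> pure_state P u g -> f <> g ->
  forall e : R, 0 < e -> exists y, [/\ P y, P (u - y) & f y + g (u - y) < e].
Proof.
move=> [sf pf] [sg pg] fg e e0; apply: NNPP => Hn.
have He : forall y, P y -> P (u - y) -> e <= f y + g (u - y).
  move=> y Py Puy; case: (lerP e (f y + g (u - y))) => // H; by exfalso; apply: Hn; exists y.
have Pu : P u by case: Hu.
set t := hm P f g u.
have te : e <= t by apply: (hm_ge HG) => // y; apply: He.
have t1 : t <= 1 by rewrite -(st_u sf); exact: (hm_lef HG sf sg).
have hadd : forall x y, P x -> P y -> hm P f g (x + y) = hm P f g x + hm P f g y.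
  by move=> x y; apply: (hm_add HG sf sg).
set H := extk HG (hm P f g).
have aH : addf H by apply: extk_add.
have HP x : P x -> H x = hm P f g x by move=> Px; apply: extk_pos.
have Hu' : H u = t by apply: HP.
have af := st_add sf; have ag := st_add sg.
case: (ltrP t 1) => t1'.
- have tn0 : t != 0 by rewrite gt_eqF // (lt_le_trans e0 te).
  have t1n0 : 1 - t != 0 by rewrite subr_eq0 eq_sym lt_eqF.
  have s1 : state P u (fun z => H z / t).
    split.
    + by move=> x y; rewrite aH mulrDl.
    + move=> x Px; rewrite HP // divr_ge0 ?(hm_ge0 HG sf sg) //; exact: (le_trans (ltW e0) te).
    + by rewrite Hu' divff.
  have s2 : forall h, state P u h -> (forall x, P x -> hm P f g x <= h x) ->
      state P u (fun z => (h z - H z) / (1 - t)).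
    move=> h sh hle; split.
    + move=> x y; rewrite (st_add sh) aH -mulrDl; congr (_ * _); lra.
    + move=> x Px; rewrite HP // divr_ge0 ?subr_ge0 ?hle //; lra.
    + by rewrite Hu' (st_u sh) divff.
  have dec h : forall z, h z = t * (H z / t) + (1 - t) * ((h z - H z) / (1 - t)).
    by move=> z; field; rewrite tn0 t1n0.
  have [E1 _] := pf _ _ _ s1 (s2 f sf (hm_lef HG sf sg)) (lt_le_trans e0 te) t1' (dec f).
  have [E2 _] := pg _ _ _ s1 (s2 g sg (hm_leg HG sf sg)) (lt_le_trans e0 te) t1' (dec g).
  by apply: fg; rewrite -E1 E2.
- have tt1 : t = 1 by apply/eqP; rewrite eq_le t1 t1'.
  have Z h : state P u h -> (forall x, P x -> hm P f g x <= h x) -> forall z, h z - H z = 0.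
    move=> sh hle; apply: (posf_zero HG (u := u)) => //.
    + by move=> x y; rewrite (st_add sh) aH; lra.
    + by move=> x Px; rewrite HP // subr_ge0 hle.
    + by rewrite Hu' (st_u sh) tt1 subrr.
  apply: fg; apply: funext => z.
  have := Z f sf (hm_lef HG sf sg) z; have := Z g sg (hm_leg HG sf sg) z; lra.
Qed.
End MeetSmall.
Section Matrix.
Variable R : realType.

Lemma argmax_ex n (F : 'I_n -> R) : (0 < n)%N -> exists i, forall j, F j <= F i.
Proof.
move=> n0; pose i0 := Ordinal n0.
case: (@arg_maxP _ _ 'I_n i0 xpredT F isT) => i _ Hi; exists i => j; exact: Hi.
Qed.

Lemma near_id_free n (A : 'M[R]_n) (e : R) : (0 < n)%N -> 0 <= e -> e * (n%:R + 1) < 1 ->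
  (forall i, 1 - e <= A i i) -> (forall i j, j != i -> `|A j i| <= e) ->
  forall v : 'rV_n, v *m A = 0 -> v = 0.
Proof.
move=> n0 e0 en Hd Ho v Hv.
have e1 : e < 1 by apply: le_lt_trans en; rewrite ler_peMr // lerDr.
have [i0 Hi0] := argmax_ex (fun i => `|v 0 i|) n0.
set m := `|v 0 i0| in Hi0.
have E : v 0 i0 * A i0 i0 = - \sum_(j | j != i0) v 0 j * A j i0.
  apply/eqP; rewrite -addr_eq0.
  by move/rowP: Hv => /(_ i0); rewrite !mxE (bigD1 i0) //= => ->.
have B1 : m * (1 - e) <= m * A i0 i0 by rewrite ler_wpM2l // normr_ge0.
have B2 : m * A i0 i0 <= m * e *+ n.
  have -> : m * A i0 i0 = `|v 0 i0 * A i0 i0|.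
    rewrite normrM [`|A i0 i0|]ger0_norm //; apply: le_trans (Hd i0); lra.
  rewrite E normrN; apply: (le_trans (ler_norm_sum _ _ _)).
  apply: (@le_trans _ _ (\sum_(j < n) m * e)); last by rewrite sumr_const card_ord.
  apply: (@le_trans _ _ (\sum_(j | j != i0) m * e)).
    apply: ler_sum => j ji; rewrite normrM; apply: ler_pM => //; exact: Ho.
  rewrite [X in _ <= X](bigD1 i0) //= lerDr mulr_ge0 // normr_ge0 //.
have Hm : m <= 0.
  have : m * (1 - e) <= m * e *+ n := le_trans B1 B2.
  rewrite -mulr_natr -mulrA; move=> H; apply: contraLR H; rewrite -!ltNge => mp.
  rewrite ltr_pM2l //; move: en; rewrite mulrDr mulr1; lra.
apply/rowP => j; rewrite mxE; apply/eqP; rewrite -normr_eq0 eq_le normr_ge0 andbT.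
exact: le_trans (Hi0 j) Hm.
Qed.
End Matrix.
Section Indic.
Variables (G : zmodType) (P : G -> Prop) (R : realType).
Hypothesis HG : dimension_group P.
Variables (u : G) (n : nat) (f : 'I_n -> G -> R).
Hypothesis Hu : order_unit P u.
Hypothesis Hpure : forall i, pure_state P u (f i).
Hypothesis Hinj : injective f.

Let sf i : state P u (f i) := (Hpure i).1.

Lemma ind_seq i (s : seq 'I_n) : (forall j, j \in s -> j != i) -> forall e : R, 0 < e ->
  exists x, [/\ P x, P (u - x), f i (u - x) < e & forall j, j \in s -> f j x < e].
Proof.
have Pu : P u by case: Hu.
elim: s => [|j s IH] Hs e e0.
  exists u; split => //; first by rewrite subrr; exact: P0.
  by rewrite subrr (af0 (st_add (sf i))).
have e2 : 0 < e / 2 by rewrite divr_gt0.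
have [x [Px Pux Hx Hxs]] := IH (fun k ks => Hs k (@mem_behead _ (j :: s) _ ks)) _ e2.
have ji : f j <> f i by move=> /Hinj /eqP; apply/negP; apply: Hs; rewrite inE eqxx.
have [y [Py Puy Hy]] := meet_small HG Hu (Hpure j) (Hpure i) ji e2.
have Pyx : P (y + (u - y) - x) by rewrite [y + _]addrC subrK.
have [x1 [P1 P2 P3 P4]] := Pdec HG Px Py Puy Pyx.
have pos k a : P a -> 0 <= f k a by apply: (st_pos (sf k)).
have mono k a b : P (b - a) -> f k a <= f k b.
  by move=> H; apply: af_le (st_add (sf k)) (st_pos (sf k)) H.
exists x1; split => //.
- have -> : u - x1 = (u - x) + (x - x1) by rewrite addrA subrK.
  by apply: PD.
- have -> : u - x1 = (u - x) + (x - x1) by rewrite addrA subrK.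
  rewrite (st_add (sf i)); have := mono i _ _ P4; have := pos j y Py; lra.
- move=> k; rewrite inE => /orP [/eqP -> | ks].
    have := mono j _ _ P2; have := pos i (u - y) Puy; lra.
  have := mono k _ _ P3; have := Hxs k ks; lra.
Qed.

Lemma indicator i (e : R) : 0 < e ->
  exists x, [/\ P x, P (u - x), f i (u - x) < e & forall j, j != i -> f j x < e].
Proof.
move=> e0; have [|x [H1 H2 H3 H4]] := @ind_seq i [seq j <- enum 'I_n | j != i] _ e e0.
  by move=> j; rewrite mem_filter => /andP [].
exists x; split => // j ji; apply: H4; by rewrite mem_filter ji mem_enum.
Qed.
End Indic.
Lemma ex_minnat (Q : nat -> Prop) : (exists k, Q k) -> exists k, Q k /\ forall j, Q j -> (k <= j)%N.
Proof.
move=> [k Qk]; apply: NNPP => H.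
suff S : forall m j, (j <= m)%N -> ~ Q j by exact: (S k k (leqnn k)).
elim=> [|m IH] j jm Qj; apply: H; exists j; split => // i Qi; case: (leqP j i) => // ij.
  by move: ij; rewrite (_ : j = 0%N) //; apply/eqP; rewrite -leqn0.
by exfalso; apply: (IH i) => //; rewrite -ltnS (leq_trans ij).
Qed.

Lemma Rint_nat (R : realType) (x : R) : x \is a Rint -> 0 <= x -> exists k : nat, x = k%:R.
Proof.
move=> /RintP [z ->]; case: z => k; first by exists k.
by rewrite NegzE mulrNz oppr_ge0 lern0.
Qed.

Section Atom.
Variables (G : zmodType) (P : G -> Prop) (R : realType).
Hypothesis HG : dimension_group P.
Hypothesis Hs : simple_pog P.
Variables (u : G) (M : G -> R).
Hypothesis Hu : order_unit P u.
Hypothesis aM : addf M.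
Hypothesis Mint : forall y, M y \is a Rint.
Hypothesis Mbnd : forall x, P x -> exists K, forall y, P y -> P (x - y) -> M y <= K.
Hypothesis Mpos : exists x0, P x0 /\ 0 < M x0.
Local Open Scope classical_set_scope.

Lemma ex_max x : P x -> exists y, [/\ P y, P (x - y) & forall y', P y' -> P (x - y') -> M y' <= M y].
Proof.
move=> Px; pose E := [set r : R | exists y, [/\ P y, P (x - y) & r = M y]].
have [K HK] := Mbnd Px.
have hs : has_sup E.
  split; first by exists (M 0), 0; split => //; [exact: P0 | rewrite subr0].
  by exists K => _ [y [Py Pxy ->]]; apply: HK.
have [_ [y [Py Pxy ->]] Hy] := sup_adherent (ltr01 : (0 : R) < 1) hs.
exists y; split => // y' Py' Pxy'.
have H1 : M y' <= sup E by apply: (ub_le_sup hs.2); exists y'.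
rewrite -(Rint_ltr_addr1 (Mint y') (Mint y)); apply: (le_lt_trans H1); lra.
Qed.

Lemma ex_max' x : exists y, P x -> [/\ P y, P (x - y) & forall y', P y' -> P (x - y') -> M y' <= M y].
Proof.
case: (pselect (P x)) => Px; last by exists 0.
by have [y Hy] := ex_max Px; exists y.
Qed.

Definition ymax x := proj1_sig (cid (ex_max' x)).
Definition mp x := M (ymax x).
Lemma mpP x : P x -> [/\ P (ymax x), P (x - ymax x) & forall y', P y' -> P (x - y') -> M y' <= mp x].
Proof. exact: (proj2_sig (cid (ex_max' x))). Qed.

Lemma mp_ge x y : P x -> P y -> P (x - y) -> M y <= mp x.
Proof. by move=> Px; case: (mpP Px) => _ _ H; apply: H. Qed.

Lemma mp_ge0 x : P x -> 0 <= mp x.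
Proof. by move=> Px; rewrite -(af0 aM); apply: mp_ge => //; [exact: P0 | rewrite subr0]. Qed.

Lemma mp_int x : mp x \is a Rint. Proof. exact: Mint. Qed.

Lemma mp_add x1 x2 : P x1 -> P x2 -> mp (x1 + x2) = mp x1 + mp x2.
Proof.
move=> P1 P2; have P12 := PD HG P1 P2.
have [A1 B1 _] := mpP P1; have [A2 B2 _] := mpP P2; have [A B _] := mpP P12.
apply/eqP; rewrite eq_le; apply/andP; split.
- have Pd : P (x1 + x2 - ymax (x1 + x2)) := B.
  have [y1 [Q1 Q2 Q3 Q4]] := Pdec HG A P1 P2 Pd.
  rewrite /mp -[ymax (x1 + x2)](subrK y1) aM addrC.
  by apply: lerD; apply: mp_ge.
- rewrite /mp -aM; apply: mp_ge => //; first exact: PD.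
  by have := PD HG B1 B2; rewrite opprD addrACA.
Qed.

Lemma mp_mono x x' : P x -> P (x' - x) -> mp x <= mp x'.
Proof.
move=> Px Pd; have -> : x' = x + (x' - x) by rewrite addrC subrK.
by rewrite mp_add // lerDl mp_ge0.
Qed.

Lemma mp0 : mp 0 = 0.
Proof. by apply: (addrI (mp 0)); rewrite -mp_add ?addr0 //; exact: P0. Qed.

Lemma mp_Mn x k : P x -> mp (x *+ k) = mp x *+ k.
Proof.
move=> Px; elim: k => [|k IH]; first by rewrite !mulr0n mp0.
by rewrite !mulrS mp_add ?IH //; exact: PMn.
Qed.

Lemma mp_u : 0 < mp u.
Proof.
have [x0 [Px0 Mx0]] := Mpos; have [Pu Hu'] := Hu; have [m Hm] := Hu' x0.
have := mp_mono Px0 Hm; rewrite mp_Mn // => H.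
have H2 : 0 < mp u *+ m by apply: (lt_le_trans Mx0); apply: (le_trans _ H); apply: mp_ge => //; [rewrite subrr; exact: P0].
by rewrite lt_neqAle mp_ge0 // andbT; apply/eqP => E; move: H2; rewrite -E mul0rn ltxx.
Qed.

Lemma mp_pos y : P y -> y <> 0 -> 0 < mp y.
Proof.
move=> Py y0; have [_ Hy] := simple_unit HG Hs Py y0; have [k Hk] := Hy u.
have Pu : P u by case: Hu.
have := mp_mono Pu Hk; rewrite mp_Mn // => H.
have H2 := lt_le_trans mp_u H.
by rewrite lt_neqAle mp_ge0 // andbT; apply/eqP => E; move: H2; rewrite -E mul0rn ltxx.
Qed.

Lemma atom_exists : exists p, P p /\ forall x, P x -> exists k, x = p *+ k.
Proof.
pose Q k := exists y, [/\ P y, y <> 0 & mp y = k%:R].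
have Pu : P u by case: Hu.
have [k0 Hk0] : exists k, Q k.
  have [k Hk] := Rint_nat (mp_int u) (mp_ge0 Pu).
  exists k, u; split => //; move=> u0; move: mp_u; rewrite u0 mp0 ltxx //.
have [d [[p [Pp p0 Hp]] Hmin]] := ex_minnat (ex_intro _ k0 Hk0).
have Hge y : P y -> y <> 0 -> d%:R <= mp y.
  move=> Py y0; have [k Hk] := Rint_nat (mp_int y) (mp_ge0 Py).
  by rewrite Hk ler_nat; apply: Hmin; exists y.
have dpos : 0 < (d%:R : R) by rewrite -Hp; apply: mp_pos.
have Hat y : P y -> P (p - y) -> y = 0 \/ y = p.
  move=> Py Ppy; case: (pselect (y = 0)) => [->|y0]; first by left.
  case: (pselect (p - y = 0)) => [/eqP|py0]; first by rewrite subr_eq0 => /eqP ->; right.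
  exfalso; have E : p = y + (p - y) by rewrite addrC subrK.
  have := Hge _ Py y0; have := Hge _ Ppy py0; have := mp_add Py Ppy; rewrite -E Hp; lra.
exists p; split => // x Px.
have [_ Hpu] := simple_unit HG Hs Pp p0; have [m Hm] := Hpu x.
exact: (Pdec_n HG Pp Hat Px Hm).
Qed.
End Atom.
Definition isQ (R : realType) (x : R) := exists q : rat, x = ratr q.

Lemma isQ_frac (R : realType) (a b : int) : b <> 0 -> isQ (a%:~R / b%:~R : R).
Proof.
move=> b0; exists (a%:~R / b%:~R); rewrite rmorphM /= fmorphV /= !ratr_int //.
Qed.

Definition extf (G : Type) k (h : 'I_k -> G) (y : G) : 'I_k.+1 -> G :=
  fun i => if unlift ord_max i is Some j then h j else y.

Lemma sum_extf (G : zmodType) k (h : 'I_k -> G) y (c : 'I_k.+1 -> int) :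
  \sum_(i < k.+1) extf h y i *~ c i = \sum_(i < k) h i *~ c (lift ord_max i) + y *~ c ord_max.
Proof.
rewrite big_ord_recr /=; congr (_ + _); last by rewrite /extf unlift_none.
apply: eq_bigr => i _.
have -> : widen_ord (leqnSn k) i = lift ord_max i by apply: val_inj; rewrite /= /bump leqNgt ltn_ord.
by rewrite /extf liftK.
Qed.

Lemma nz_extf k (c : 'I_k.+1 -> int) : (exists i, c i <> 0) ->
  (exists i, c (lift ord_max i) <> 0) \/ c ord_max <> 0.
Proof.
move=> [i ci]; case: (eqVneq ord_max i) => [E|/unlift_some [j E _]].
  by right; rewrite E.
by left; exists j; rewrite -E.
Qed.

Lemma sum_delta n (F : 'I_n -> int) i : \sum_j F j * (j == i)%:Z = F i.
Proof.
rewrite (bigD1 i) //= eqxx mulr1 big1 ?addr0 // => j /negPf ->; by rewrite mulr0.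
Qed.

Lemma kernel_int n (c : 'I_n -> int) : (1 < n)%N ->
  exists l : 'I_n -> int, (exists j, l j <> 0) /\ \sum_j c j * l j = 0.
Proof.
move=> n1; have n0 : (0 < n)%N by apply: ltnW.
pose i0 := Ordinal n0; pose i1 := Ordinal n1.
have i10 : i1 != i0 by [].
case: (eqVneq (c i0) 0) => c0.
  exists (fun j => (j == i0)%:Z); split; first by exists i0; rewrite eqxx.
  by rewrite sum_delta.
exists (fun j => (j == i0)%:Z * c i1 - (j == i1)%:Z * c i0); split.
  exists i1; rewrite eqxx (negPf i10) mul0r sub0r mul1r => /eqP; rewrite oppr_eq0; by apply/negP; rewrite c0.
under eq_bigr => j _ do rewrite mulrBr !mulrA.
by rewrite sumrB -!big_distrl /= !sum_delta mulrC subrr.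
Qed.
Section IsQ.
Variable R : realType.
Lemma isQ_int (z : int) : isQ (z%:~R : R). Proof. by exists z%:~R; rewrite ratr_int. Qed.
Lemma isQ_mul (x y : R) : isQ x -> isQ y -> isQ (x * y).
Proof. by move=> [a ->] [b ->]; exists (a * b); rewrite rmorphM. Qed.
Lemma isQ_inv (x : R) : isQ x -> isQ (x^-1).
Proof. by move=> [a ->]; exists (a^-1); rewrite fmorphV. Qed.
Lemma isQ_opp (x : R) : isQ x -> isQ (- x).
Proof. by move=> [a ->]; exists (- a); rewrite rmorphN. Qed.
Lemma isQ_add (x y : R) : isQ x -> isQ y -> isQ (x + y).
Proof. by move=> [a ->] [b ->]; exists (a + b); rewrite rmorphD. Qed.
End IsQ.

Section Main.
Variables (R : realType) (G : zmodType) (P : G -> Prop) (u : G) (n : nat).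
Hypothesis HG : dimension_group P.
Hypothesis Hs : simple_pog P.
Hypothesis Hu : order_unit P u.
Hypothesis n1 : (1 < n)%N.
Variable f : 'I_n -> G -> R.
Hypothesis finj : injective f.
Hypothesis Hpure : forall i, pure_state P u (f i).
Variables (v g : G) (c : R).
Hypothesis hv : order_unit P v.
Hypothesis Hfg : forall i, f i g = c * f i v.
Hypothesis Hc : ~ isQ c.

Let sf i : state P u (f i) := (Hpure i).1.
Let af i : addf (f i) := st_add (sf i).
Let n0 : (0 < n)%N := ltnW n1.
Let i0 : 'I_n := Ordinal n0.

Definition Phi y : 'rV[R]_n := \row_i f i y.

Lemma PhiD a b : Phi (a + b) = Phi a + Phi b.
Proof. by apply/rowP => i; rewrite !mxE (af i). Qed.

Lemma PhiInf y : Inf P u y -> Phi y = 0.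
Proof. by move=> Hy; apply/rowP => i; rewrite !mxE (st_Inf (sf i) Hy). Qed.

Lemma Phi_sum k (h : 'I_k -> G) (cc : 'I_k -> int) :
  Phi (\sum_i h i *~ cc i) = \sum_i (cc i)%:~R *: Phi (h i).
Proof.
apply/rowP => j; rewrite !mxE (af_sum (af j)) summxE; apply: eq_bigr => i _.
by rewrite !mxE (afMz (af j)) mulrzl.
Qed.

Lemma Phi_g : Phi g = c *: Phi v.
Proof. by apply/rowP => i; rewrite !mxE Hfg. Qed.

Lemma Phiv0 : Phi v <> 0.
Proof.
move/rowP => /(_ i0); rewrite !mxE => E; have := st_unit_pos (sf i0) hv.
by rewrite E ltxx.
Qed.

Definition eps : R := (n%:R + 1)^-1 / 2.
Lemma eps0 : 0 < eps. Proof. by rewrite /eps divr_gt0 // invr_gt0 ltr_wpDl. Qed.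

Definition xx j : G := proj1_sig (cid (indicator HG Hu Hpure finj j eps0)).
Lemma xxP j : [/\ P (xx j), P (u - xx j), f j (u - xx j) < eps & forall i, i != j -> f i (xx j) < eps].
Proof. exact: (proj2_sig (cid (indicator HG Hu Hpure finj j eps0))). Qed.

Definition A : 'M[R]_n := \matrix_(j, i) f i (xx j).

Lemma rowA j : row j A = Phi (xx j).
Proof. by apply/rowP => i; rewrite !mxE. Qed.

Lemma Afree : row_free A.
Proof.
apply: inj_row_free; apply: (@near_id_free _ n A eps) => //.
- exact: ltW eps0.
- rewrite /eps mulrAC mulVf ?mul1r; last by rewrite gt_eqF // ltr_wpDl.
  by rewrite invf_lt1 // ltr1n.
- move=> i; rewrite mxE; have [_ _ H _] := xxP i.
  move: H; rewrite (afB (af i)) (st_u (sf i)); lra.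
- move=> i j ji; rewrite mxE; have [Pj _ _ H] := xxP j.
  by rewrite ger0_norm ?(st_pos (sf i)) // ltW // H // eq_sym.
Qed.

Lemma Aunit : A \in unitmx. Proof. by rewrite -row_free_unit Afree. Qed.

Definition crow (cc : 'I_n -> int) : 'rV[R]_n := \row_j (cc j)%:~R.

Lemma Phi_sum_x cc : Phi (\sum_j xx j *~ cc j) = crow cc *m A.
Proof. by rewrite Phi_sum mulmx_sum_row; apply: eq_bigr => j _; rewrite rowA mxE. Qed.

Lemma crow0 cc : crow cc *m A = 0 -> forall j, cc j = 0.
Proof.
move=> H0; have : crow cc *m A = 0 *m A by rewrite mul0mx.
move=> /(row_free_inj Afree) /rowP H j.
by have := H j; rewrite !mxE => /eqP; rewrite intr_eq0 => /eqP.
Qed.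

Lemma PhiMz y (z : int) : Phi (y *~ z) = z%:~R *: Phi y.
Proof. by apply/rowP => i; rewrite !mxE (afMz (af i)) mulrzl. Qed.

Lemma not_indep k (h : 'I_k -> G) : ~ indep_mod (Inf P u) h ->
  exists cc, Inf P u (\sum_i h i *~ cc i) /\ exists i, cc i <> 0.
Proof.
move=> Hn; apply: NNPP => H; apply: Hn => cc Hcc i; apply: NNPP => ci.
by apply: H; exists cc; split => //; exists i.
Qed.

Lemma dep1 (Hr : forall h : 'I_n.+1 -> G, ~ indep_mod (Inf P u) h) y :
  exists cc cy, ((exists j, cc j <> 0) \/ cy <> 0) /\ crow cc *m A + cy%:~R *: Phi y = 0.
Proof.
have [cc [HI Hnz]] := not_indep (Hr (extf xx y)).
exists (fun j => cc (lift ord_max j)), (cc ord_max); split; first exact: nz_extf.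
by have := PhiInf HI; rewrite sum_extf PhiD Phi_sum_x PhiMz.
Qed.

Lemma dep2 (Hr : forall h : 'I_n.+2 -> G, ~ indep_mod (Inf P u) h) w y :
  exists cc cw cy, ((exists j, cc j <> 0) \/ cw <> 0 \/ cy <> 0) /\
    crow cc *m A + cw%:~R *: Phi w + cy%:~R *: Phi y = 0.
Proof.
have [cc [HI Hnz]] := not_indep (Hr (extf (extf xx w) y)).
exists (fun j => cc (lift ord_max (lift ord_max j))), (cc (lift ord_max ord_max)), (cc ord_max).
split.
  case: (nz_extf Hnz) => [H|H]; last by right; right.
  by case: (nz_extf H) => [H'|H']; [left | right; left].
by have := PhiInf HI; rewrite sum_extf sum_extf !PhiD Phi_sum_x !PhiMz.
Qed.

Lemma rep1 (Hr : forall h : 'I_n.+1 -> G, ~ indep_mod (Inf P u) h) y :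
  exists cc cy, cy <> 0 /\ Phi y = ((- (cy%:~R)^-1) *: crow cc) *m A.
Proof.
have [cc [cy [Hnz H]]] := dep1 Hr y.
case: (eqVneq cy 0) => cy0.
  move: H; rewrite cy0 scale0r addr0 => /crow0 H.
  by exfalso; case: Hnz => // -[j]; rewrite H.
exists cc, cy; split; first by apply/eqP.
move/eqP: H; rewrite addr_eq0 => /eqP H.
have cyR : (cy%:~R : R) != 0 by rewrite intr_eq0.
by rewrite -scalemxAl H scaleNr scalerN opprK scalerA mulVf ?scale1r.
Qed.

Lemma case1 (Hr : forall h : 'I_n.+1 -> G, ~ indep_mod (Inf P u) h) : False.
Proof.
have [ccv [cv [cv0 Ev]]] := rep1 Hr v; have [ccg [cg [cg0 Eg]]] := rep1 Hr g.
have E : (- (cg%:~R)^-1 *: crow ccg) = c *: (- (cv%:~R)^-1 *: crow ccv).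
  by apply: (row_free_inj Afree); rewrite /= -Eg -scalemxAl -Ev Phi_g.
have [j ccj] : exists j, ccv j <> 0.
  apply: NNPP => H; apply: Phiv0; rewrite Ev.
  suff -> : crow ccv = 0 by rewrite scaler0 mul0mx.
  apply/rowP => i; rewrite !mxE.
  case: (eqVneq (ccv i) 0) => [->|ci]; first by [].
  by exfalso; apply: H; exists i; apply/eqP.
move/rowP: E => /(_ j); rewrite !mxE => E.
have al0 : - (cv%:~R)^-1 * (ccv j)%:~R != 0 :> R.
  by rewrite mulf_neq0 // ?oppr_eq0 ?invr_eq0 intr_eq0; apply/eqP.
apply: Hc; have -> : c = (- (cg%:~R)^-1 * (ccg j)%:~R) / (- (cv%:~R)^-1 * (ccv j)%:~R).
  by rewrite E mulfK.
apply: isQ_mul; last apply: isQ_inv; apply: isQ_mul; try apply: isQ_opp; try apply: isQ_inv; exact: isQ_int.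
Qed.

Lemma intr_sum (F : 'I_n -> int) : ((\sum_i F i)%:~R : R) = \sum_i (F i)%:~R.
Proof. by elim/big_rec2: _ => //= i a b _ <-; rewrite intrD. Qed.

Lemma step1 (Hr : forall h : 'I_n.+2 -> G, ~ indep_mod (Inf P u) h) :
  exists cc (be : R), [/\ be != 0, (exists j, cc j <> 0) & Phi v = be *: (crow cc *m A)].
Proof.
have [cc [cv [cg [Hnz H]]]] := dep2 Hr v g.
move: H; rewrite Phi_g scalerA -addrA -scalerDl; set d := (_ + _ * c) => H.
have Hd : d != 0.
  apply/eqP => d0; move: H; rewrite d0 scale0r addr0 => /crow0 H.
  case: (eqVneq cg 0) => cg0.
    move: d0; rewrite /d cg0 mulr0z mul0r addr0 => /eqP; rewrite intr_eq0 => /eqP cv0.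
    by case: Hnz => [[j]|[]]; rewrite ?H //.
  apply: Hc; have -> : c = - (cv%:~R) / (cg%:~R).
    move: d0; rewrite /d => /eqP; rewrite addr_eq0 => /eqP ->.
    by rewrite opprK [_ * c]mulrC mulfK // intr_eq0.
  by apply: isQ_mul; [apply: isQ_opp | apply: isQ_inv]; apply: isQ_int.
have Ev : Phi v = (- d^-1) *: (crow cc *m A).
  move/eqP: H; rewrite addr_eq0 => /eqP ->.
  by rewrite scalerN scaleNr opprK scalerA mulVf ?scale1r.
exists cc, (- d^-1); split => //.
- by rewrite oppr_eq0 invr_eq0.
- apply: NNPP => Hn; apply: Phiv0; rewrite Ev.
  suff -> : crow cc = 0 by rewrite mul0mx scaler0.
  apply/rowP => i; rewrite !mxE.
  case: (eqVneq (cc i) 0) => [->|ci]; first by [].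
  by exfalso; apply: Hn; exists i; apply/eqP.
Qed.

Lemma step2 cc (be : R) : be != 0 -> Phi v = be *: (crow cc *m A) ->
  exists w (bw : R), Phi w = bw *: (crow cc *m A) /\ ~ isQ bw.
Proof.
move=> be0 Ev; case: (pselect (isQ be)) => Qb; last by exists v, be.
exists g, (c * be); split; first by rewrite Phi_g Ev scalerA.
move=> Qcb; apply: Hc; have -> : c = (c * be) / be by rewrite mulfK.
by apply: isQ_mul => //; apply: isQ_inv.
Qed.

Section Case2.
Hypothesis Hr : forall h : 'I_n.+2 -> G, ~ indep_mod (Inf P u) h.
Variables (cc : 'I_n -> int) (w : G) (bw : R).
Hypothesis ccnz : exists j, cc j <> 0.
Hypothesis Ew : Phi w = bw *: (crow cc *m A).
Hypothesis Qbw : ~ isQ bw.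
Variable l : 'I_n -> int.
Hypothesis lnz : exists j, l j <> 0.
Hypothesis Hl : \sum_j cc j * l j = 0.

Definition lcol : 'cV[R]_n := \col_j (l j)%:~R.
Definition Bv : 'cV[R]_n := invmx A *m lcol.
Definition ell y : R := \sum_i f i y * Bv i 0.

Lemma ellE y : ell y = (Phi y *m Bv) 0 0.
Proof. by rewrite /ell [in RHS]mxE; apply: eq_bigr => i _; rewrite [Phi _ _ _]mxE. Qed.

Lemma AB (X : 'rV[R]_n) : X *m A *m Bv = X *m lcol.
Proof. by rewrite /Bv mulmxA mulmxK // Aunit. Qed.

Lemma rl : crow cc *m lcol = 0.
Proof.
apply/matrixP => i k; rewrite !mxE (eq_bigr (fun j => ((cc j * l j)%:~R : R))).
  by rewrite -intr_sum Hl.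
by move=> j _; rewrite !mxE intrM.
Qed.

Lemma crow_int cc' : (crow cc' *m lcol) 0 0 \is a Rint.
Proof. by rewrite mxE; apply: rpred_sum => j _; rewrite !mxE; apply: rpredM; apply: RintC. Qed.

Lemma ell_rat y : exists b : int, b <> 0 /\ ell y * b%:~R \is a Rint.
Proof.
have [cc2 [cw [cy [Hnz H]]]] := dep2 Hr w y.
move: H; rewrite Ew scalerA scalemxAl -mulmxDl; set Y := (crow cc2 + _) => H.
case: (eqVneq cy 0) => cy0.
  exfalso; move: H; rewrite cy0 scale0r addr0 => H.
  have Y0 : Y = 0 by apply: (row_free_inj Afree); rewrite /= H mul0mx.
  case: (eqVneq cw 0) => cw0.
    move: Y0; rewrite /Y cw0 mulr0z mul0r scale0r addr0 => Y0.
    have H0 : crow cc2 *m A = 0 by rewrite Y0 mul0mx.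
    case: Hnz => [[j cj]|[cw1|cy1]].
    - by move: (crow0 H0 j).
    - by rewrite cw0 in cw1.
    - by rewrite cy0 in cy1.
  have [j cj] := ccnz; apply: Qbw.
  move/rowP: Y0 => /(_ j); rewrite !mxE => /eqP; rewrite addr_eq0 => /eqP E.
  have -> : bw = - (cc2 j)%:~R / ((cw%:~R) * (cc j)%:~R).
    rewrite E opprK [_ * bw]mulrC -[bw * _ * _]mulrA mulfK // mulf_neq0 // intr_eq0 //; exact/eqP.
  by apply: isQ_mul; [apply: isQ_opp; apply: isQ_int | apply: isQ_inv; apply: isQ_mul; apply: isQ_int].
exists cy; split; first by apply/eqP.
have cyR : (cy%:~R : R) != 0 by rewrite intr_eq0.
have Ey : Phi y = (- (cy%:~R)^-1) *: (Y *m A).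
  move/eqP: H; rewrite addr_eq0 => /eqP ->.
  by rewrite scalerN scaleNr opprK scalerA mulVf ?scale1r.
rewrite ellE Ey -scalemxAl AB /Y mulmxDl -scalemxAl rl scaler0 addr0.
rewrite mxE mulrAC mulNr mulVf // mulN1r rpredN; exact: crow_int.
Qed.

Lemma ell_add : addf ell.
Proof. by move=> a b; rewrite /ell -big_split; apply: eq_bigr => i _; rewrite (af i) mulrDl. Qed.

Lemma ell_Inf y : Inf P u y -> ell y = 0.
Proof. by move=> Hy; rewrite /ell big1 // => i _; rewrite (st_Inf (sf i) Hy) mul0r. Qed.

Lemma ell_x j : ell (xx j) = (l j)%:~R.
Proof. by rewrite ellE -rowA rowE AB -rowE !mxE. Qed.

Hypothesis Hfgq : quot_fg (Inf P u).

Lemma ex_N : exists N : int, N <> 0 /\ forall y, N%:~R * ell y \is a Rint.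
Proof.
have [k [s Hs']] := Hfgq.
pose bb i := proj1_sig (cid (ell_rat (s i))).
have bbP i : bb i <> 0 /\ ell (s i) * (bb i)%:~R \is a Rint := proj2_sig (cid (ell_rat (s i))).
exists (\prod_i bb i); split.
  by apply/eqP/prodf_neq0 => i _; apply/eqP; case: (bbP i).
move=> y; have [cy Hy] := Hs' y.
have E : ell y = \sum_i ell (s i) *~ cy i.
  have := ell_Inf Hy; rewrite (afB ell_add) (af_sum ell_add) => /eqP; rewrite subr_eq0 => /eqP ->.
  by apply: eq_bigr => i _; rewrite (afMz ell_add).
rewrite E mulr_sumr; apply: rpred_sum => i _; rewrite mulrzAr; apply: rpredMz.
rewrite (bigD1 i) //= intrM mulrAC [_ * ell _]mulrC; apply: rpredM; last exact: RintC.
by case: (bbP i).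
Qed.
End Case2.

Lemma final_contra : (exists p, P p /\ forall x, P x -> exists k, x = p *+ k) -> False.
Proof.
move=> [p [Pp Hp]].
pose i1 : 'I_n := Ordinal n1.
have i01 : i0 != i1 by [].
have Pu : P u by case: Hu.
have [ku Eu] := Hp u Pu.
have Hfp i : f i p *+ ku = 1 by rewrite -(afMn (af i)) -Eu (st_u (sf i)).
have ku0 : ku != 0%N by apply/eqP => k0; move: (Hfp i0); rewrite k0 mulr0n => /eqP; rewrite eq_sym oner_eq0.
have E : f i0 p = f i1 p.
  apply: (mulIf (x := ku%:R)); first by rewrite pnatr_eq0.
  by rewrite !mulr_natr !Hfp.
have Epos x : P x -> f i0 x = f i1 x.
  by move=> Px; have [k ->] := Hp x Px; rewrite !(afMn (af _)) E.
have : f i0 = f i1.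
  apply: funext => z; have [a [b [Pa Pb ->]]] := Pdir HG z.
  by rewrite !(afB (af _)) !Epos.
by move/finj/eqP; rewrite (negPf i01).
Qed.

Lemma atom_from (M : G -> R) (mu : 'I_n -> R) : (forall y, M y = \sum_i f i y * mu i) ->
  (forall y, M y \is a Rint) -> (exists x0, P x0 /\ 0 < M x0) -> False.
Proof.
move=> HM Mint Mpos; apply: final_contra.
apply: (atom_exists HG Hs Hu (M := M)) => //.
- by move=> a b; rewrite !HM -big_split; apply: eq_bigr => i _; rewrite (af i) mulrDl.
- move=> x Px; exists (\sum_i f i x * `|mu i|) => y Py Pxy; rewrite HM.
  apply: ler_sum => i _; apply: (le_trans (y := f i y * `|mu i|)).
    by rewrite ler_wpM2l ?(st_pos (sf i)) // ler_norm.
  by rewrite ler_wpM2r ?normr_ge0 //; apply: af_le (af i) (st_pos (sf i)) Pxy.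
Qed.

Lemma case2 (Hr : forall h : 'I_n.+2 -> G, ~ indep_mod (Inf P u) h) (Hq : quot_fg (Inf P u)) : False.
Proof.
have [cc [be [be0 ccnz Ev]]] := step1 Hr.
have [w [bw [Ew Qbw]]] := step2 be0 Ev.
have [l [lnz Hl]] := kernel_int cc n1.
have [N [N0 HN]] := ex_N Hr ccnz Ew Qbw Hl Hq.
have [j lj] := lnz.
have HM y : N%:~R * ell l y = \sum_i f i y * (N%:~R * Bv l i 0).
  by rewrite /ell mulr_sumr; apply: eq_bigr => i _; rewrite mulrCA.
have Mx : N%:~R * ell l (xx j) != 0 by rewrite ell_x -intrM intr_eq0 mulf_neq0 //; apply/eqP.
have Pj : P (xx j) by case: (xxP j).
case: (ltrP 0 (N%:~R * ell l (xx j))) => Hpos.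
  by apply: (atom_from (M := fun y => N%:~R * ell l y)) HM HN _; exists (xx j).
apply: (atom_from (M := fun y => - (N%:~R * ell l y)) (mu := fun i => - (N%:~R * Bv l i 0))).
- by move=> y; rewrite HM -sumrN; apply: eq_bigr => i _; rewrite mulrN.
- by move=> y; rewrite rpredN.
- exists (xx j); split => //; rewrite oppr_gt0 lt_neqAle Hpos andbT //.
Qed.
End Main.
Unset Implicit Arguments.

Theorem mainTheorem15 (R : realType) (G : zmodType) (P : G -> Prop) (u : G) (n : nat) :
  dimension_group P -> simple_pog P -> order_unit P u -> (1 < n)%N ->
  exactly_n_pure_states P R u n ->
  (rank_quot_eq (Inf P u) n \/ (rank_quot_eq (Inf P u) n.+1 /\ quot_fg (Inf P u))) ->
  globally_irrationally_miscible P R.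
Proof.
move=> HG Hs Hu n1 [f [finj Hf]] Hrank v hv g Hg s hs.
have Hpure i : pure_state P u (f i) by apply/Hf; exists i.
apply: NNPP => Hc.
have Hfg i : f i g = s g * f i v.
  have si := st_scale (Hpure i).1 hv.
  have := Hg _ _ si hs => <-; rewrite divfK //.
  by rewrite gt_eqF // (st_unit_pos (Hpure i).1 hv).
case: Hrank => [[_ Hr]|[[_ Hr] Hq]].
- exact: (case1 HG Hu n1 finj Hpure hv Hfg Hc Hr).
- exact: (case2 HG Hs Hu n1 finj Hpure hv Hfg Hc Hr Hq).
Qed.
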